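(* Let $G$ and $H$ be finite groups with $|G| = |H| = N$. For a finite group $X$ and an integer $n \ge 1$, define \[ m_n(X) = \sum_{\chi_1,\dots,\chi_n \in \mathrm{Irr}(X)} \Big[1_X,\ \prod_{i=1}^{n} \chi_i\overline{\chi_i}\Big], \qquad r_n(X) = \sum_{\chi_1,\dots,\chi_n \in \mathrm{Irr}(X)} \Big[1_X,\ \prod_{i=1}^{n} \chi_i^{2}\Big], \] where the sums run over all $n$-tuples of irreducible complex characters (repetition allowed). (1) If $m_n(G) = m_n(H)$ for all $n = 1,2,\dots,N$, then for every positive integer $k$ the number of conjugacy classes of $G$ of size $k$ equals the number of conjugacy classes of $H$ of size $k$. (2) If $r_n(G) = r_n(H)$ for all $n = 1,2,\dots,N$, then for every positive integer $k$ the number of real conjugacy classes of $G$ of size $k$ equals the number of real conjugacy classes of $H$ of size $k$.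
   Context: For a finite group $X$, $\mathrm{Irr}(X)$ is the set of irreducible complex characters of $X$, $1_X$ is the trivial character, $\overline{\chi}$ is the complex conjugate character, and for class functions $\alpha,\beta$ on $X$, $[\alpha,\beta] = \frac{1}{|X|}\sum_{x\in X}\alpha(x)\overline{\beta(x)}$ is the usual inner product (so $[1_X,\theta]$ is the multiplicity of the trivial character in a character $\theta$). A conjugacy class $K$ of $X$ is real if $K = K^{-1} = \{x^{-1} : x \in K\}$. *)

(* Defs.v *)
From HB Require Import structures.
From mathcomp Require Import all_boot all_algebra all_fingroup all_solvable all_field all_character.
Set Implicit Arguments. Unset Strict Implicit. Unset Printing Implicit Defensive.
Import GRing.Theory Num.Theory.
Local Open Scope ring_scope.

Definition m_n (gT : finGroupType) (X : {group gT}) (n : nat) : algC :=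
  \sum_(t : {ffun 'I_n -> Iirr X})
     '[1, \prod_(i < n) ('chi_(t i) * ('chi_(t i))^*%CF)]_X.

Definition r_n (gT : finGroupType) (X : {group gT}) (n : nat) : algC :=
  \sum_(t : {ffun 'I_n -> Iirr X})
     '[1, \prod_(i < n) ('chi_(t i) ^+ 2)]_X.

Definition nclasses_of_size (gT : finGroupType) (X : {group gT}) (k : nat) : nat :=
  #|[set C in classes X | #|C| == k]|.

Definition nreal_classes_of_size (gT : finGroupType) (X : {group gT}) (k : nat) : nat :=
  #|[set C in classes X | (#|C| == k) && ((C^-1)%g == C)]|.

(* Main.v *)
Require Import Defs.
From mathcomp Require Import all_boot all_algebra all_fingroup all_solvable all_field all_character.
Set Implicit Arguments. Unset Strict Implicit. Unset Printing Implicit Defensive.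
Import GRing.Theory Num.Theory.

Section Alg.
Local Open Scope ring_scope.
Lemma powsum0 (M : nat) (d : nat -> algC) :
  (forall n, (0 < n < M)%N -> \sum_(v < M) d v * v%:R ^+ n = 0) ->
  forall v0, (0 < v0 < M)%N -> d v0 = 0.
Proof.
case: M => [|M] hyp v0 /andP[v0p v0M]; first by [].
set r := rem v0 (iota 0%N M.+1).
set P := \prod_(w <- r) ('X - (w%:R : algC)%:P).
have sP : (size P <= M.+1)%N.
  by rewrite size_prod_XsubC size_rem ?size_iota // mem_iota.
have memr w : (w < M.+1)%N -> w != v0 -> w \in r.
  by move=> wM wv; rewrite mem_rem_uniq ?iota_uniq // inE mem_iota wv.
have Pw w : (w < M.+1)%N -> w != v0 -> P.[w%:R] = 0.
  move=> wM wv; rewrite horner_prod; apply/eqP; rewrite prodf_seq_eq0.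
  by apply/hasP; exists w; [exact: memr | rewrite hornerXsubC subrr eqxx].
have P0 : P`_0 = 0.
  rewrite -horner_coef0; apply: (Pw 0%N) => //.
  by rewrite eq_sym -lt0n.
have Pv0 : P.[v0%:R] != 0.
  rewrite horner_prod prodf_seq_neq0; apply/allP => w wr /=.
  rewrite hornerXsubC subr_eq0 eqr_nat.
  move: wr; rewrite mem_rem_uniq ?iota_uniq // inE => /andP[wv _].
  by rewrite eq_sym.
have S : \sum_(v < M.+1) d v * P.[v%:R] = 0.
  under eq_bigr do rewrite (horner_coef_wide _ sP) mulr_sumr.
  rewrite exchange_big /= big_ord_recl /= big1 => [|i _]; last first.
    by rewrite P0 mul0r mulr0.
  rewrite add0r big1 // => i _.
  under eq_bigr do rewrite mulrCA.
  by rewrite -mulr_sumr hyp ?mulr0 // /bump leq0n add1n ltnS leq0n ltnS ltn_ord.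
move: S; rewrite (bigD1 (Ordinal v0M)) //= big1 ?addr0 => [|w wv].
  by move/eqP; rewrite mulf_eq0 (negPf Pv0) orbF => /eqP.
by rewrite Pw ?mulr0 // -(inj_eq val_inj).
Qed.

Lemma distr (T : finType) (M : nat) (G : {set T}) (a : T -> nat) (F : nat -> algC) :
  {in G, forall x, (a x < M.+1)%N} ->
  \sum_(x in G) F (a x) = \sum_(v < M.+1) #|[set x in G | a x == v]|%:R * F v.
Proof.
move=> aM.
rewrite (partition_big (fun x => inord (a x) : 'I_M.+1) xpredT) //=.
apply: eq_big => // v _.
rewrite (eq_bigl (mem [set x in G | a x == v])) => [|x]; last first.
  rewrite !inE; case xG: (x \in G) => //=.
  by rewrite -(inj_eq val_inj) /= inordK ?aM.
rewrite mulr_natl -sumr_const.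
apply: eq_bigr => x xS; move: (xS : x \in [set x in G | a x == v]); rewrite inE => /andP[_ /eqP ->].
by [].
Qed.

Lemma key (gT hT : finType) (G : {set gT}) (H : {set hT}) (aG : gT -> nat) (aH : hT -> nat) M :
 {in G, forall x, (aG x < M)%N} -> {in H, forall y, (aH y < M)%N} ->
 (forall n, (0 < n < M)%N -> \sum_(x in G) (aG x)%:R ^+ n = \sum_(y in H) (aH y)%:R ^+ n :> algC) ->
 forall v, (0 < v < M)%N -> #|[set x in G | aG x == v]| = #|[set y in H | aH y == v]|.
Proof.
case: M => [|M] aGM aHM hyp v vM; first by case/andP: vM.
apply/eqP; rewrite -(eqr_nat algC) -subr_eq0; apply/eqP.
pose d w := (#|[set x in G | aG x == w]|%:R - #|[set y in H | aH y == w]|%:R : algC).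
apply: (@powsum0 M.+1 d) vM => n nM.
move: (hyp n nM); rewrite (distr (fun w => w%:R ^+ n) aGM) (distr (fun w => w%:R ^+ n) aHM).
move/eqP; rewrite -subr_eq0 -sumrB => /eqP S; apply: etrans S.
by apply: eq_bigr => w _; rewrite mulrBl.
Qed.

End Alg.

Section Chars.
Local Open Scope ring_scope.
Lemma mformula (gT : finGroupType) (G : {group gT}) n :
  m_n G n = #|G|%:R^-1 * \sum_(x in G) (#|('C_G[x])%g|%:R) ^+ n.
Proof.
rewrite /m_n; under eq_bigr do rewrite cfdotE.
rewrite -mulr_sumr; congr (_ * _).
rewrite exchange_big /=; apply: eq_bigr => x xG.
under eq_bigr do rewrite cfun1E xG mul1r prod_cfunE //.
rewrite -rmorph_sum.
under eq_bigr do under eq_bigr do rewrite cfunE cfunE.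
rewrite -(bigA_distr_bigA (fun (i : 'I_n) j => 'chi[G]_j x * ('chi_j x)^*)) /=.
rewrite prodr_const card_ord second_orthogonality_relation // class_refl.
by rewrite mulr1n rmorphXn /= conjC_nat.
Qed.

Definition aR (gT : finGroupType) (G : {group gT}) (x : gT) : nat :=
  if x \in ((x^-1) ^: G)%g then #|('C_G[x])%g| else 0.

Lemma rformula (gT : finGroupType) (G : {group gT}) n :
  r_n G n = #|G|%:R^-1 * \sum_(x in G) ((aR G x)%:R) ^+ n.
Proof.
rewrite /r_n; under eq_bigr do rewrite cfdotE.
rewrite -mulr_sumr; congr (_ * _).
rewrite exchange_big /=; apply: eq_bigr => x xG.
under eq_bigr do rewrite cfun1E xG mul1r prod_cfunE //.
rewrite -rmorph_sum.
under eq_bigr do under eq_bigr do rewrite expr2 cfunE.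
rewrite -(bigA_distr_bigA (fun (i : 'I_n) j => 'chi[G]_j x * 'chi_j x)) /=.
have -> : \sum_j 'chi[G]_j x * 'chi_j x = \sum_j 'chi[G]_j x * ('chi_j (x^-1)%g)^*.
  by apply: eq_bigr => j _; rewrite char_inv ?irr_char // conjCK.
rewrite prodr_const card_ord second_orthogonality_relation ?groupV // /aR.
by case: (x \in _); rewrite ?mulr0n ?mulr1n rmorphXn /= ?conjC_nat ?rmorph0.
Qed.

End Chars.

Section Cls.
Local Open Scope group_scope.
Lemma classcount (gT : finGroupType) (G : {group gT}) k (Q : {set gT} -> bool) :
  (#|[set C in classes G | (#|C| == k) && Q C]| * k =
   #|[set x in G | (#|x ^: G| == k) && Q (x ^: G)]|)%N.
Proof.
set S := [set C in classes G | _].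
have sub : S \subset classes G by apply/subsetP => C; rewrite inE => /andP[].
have tI : trivIset S.
  by apply: trivIsetS sub _; case/and3P: (classes_partition G).
have cov : cover S = [set x in G | (#|x ^: G| == k) && Q (x ^: G)].
  apply/setP => x; rewrite inE; apply/bigcupP/andP.
    case=> C; rewrite inE => /andP[/imsetP[y yG ->] yk] xy.
    have xG : x \in G by case/imsetP: xy => z zG ->; rewrite groupJ.
    by split=> //; rewrite (class_eqP xy).
  case=> xG xk; exists (x ^: G); last exact: class_refl.
  by rewrite inE mem_classes.
rewrite -cov -(eqP tI) -sum_nat_const; apply: eq_bigr => C; rewrite inE.
by case/andP=> _ /andP[/eqP].
Qed.

Lemma cardGclass (gT : finGroupType) (G : {group gT}) x :
  x \in G -> #|G| = (#|x ^: G| * #|'C_G[x]|)%N.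
Proof.
by move=> xG; rewrite -index_cent1 mulnC Lagrange // subsetIl.
Qed.

Lemma count_via (gT : finGroupType) (G : {group gT}) k (b : gT -> bool) :
  (0 < k)%N ->
  #|[set x in G | (#|x ^: G| == k) && b x]| =
  if k %| #|G| then #|[set x in G | (if b x then #|'C_G[x]| else 0) == #|G| %/ k]|
  else 0.
Proof.
move=> k0; have N0 := cardG_gt0 G.
case: ifP => kN.
  have v0 : (0 < #|G| %/ k)%N by rewrite divn_gt0 // dvdn_leq.
  apply: eq_card => x; rewrite !inE; case xG: (x \in G) => //=.
  have L := cardGclass xG.
  case: (b x); last by rewrite andbF eq_sym; move: v0; rewrite lt0n => /negPf ->.
  rewrite andbT; apply/eqP/eqP => [e|e].
    by rewrite L e mulKn.
  have c0 : (0 < #|'C_G[x]|)%N by rewrite cardG_gt0.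
  by apply/eqP; rewrite -(eqn_pmul2r c0) -L e mulnC divnK.
apply/eqP; rewrite cards_eq0; apply/eqP/setP => x; rewrite !inE.
case xG: (x \in G) => //=; apply/negP => /andP[/eqP e _].
by move: kN; rewrite (cardGclass xG) e dvdn_mulr.
Qed.

End Cls.

Theorem theorem3 (gT hT : finGroupType) (G : {group gT}) (H : {group hT}) :
  #|G| = #|H| ->
  ((forall n : nat, 1 <= n <= #|G| -> m_n G n = m_n H n) ->
     forall k : nat, 0 < k -> nclasses_of_size G k = nclasses_of_size H k)
  /\
  ((forall n : nat, 1 <= n <= #|G| -> r_n G n = r_n H n) ->
     forall k : nat, 0 < k -> nreal_classes_of_size G k = nreal_classes_of_size H k).
Proof.
move=> GH.
have Ninv : ((#|G|%:R)^-1 : algC)%R != 0%R.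
  by rewrite GRing.invr_eq0 pnatr_eq0 -lt0n cardG_gt0.
have cbound (fT : finGroupType) (K : {group fT}) :
    {in K, forall x, #|('C_K[x])%g| < #|K|.+1}.
  by move=> x _; rewrite ltnS subset_leq_card // subsetIl.
have vbound (fT : finGroupType) (K : {group fT}) k :
    k %| #|K| -> 0 < k -> 0 < #|K| %/ k < #|K|.+1.
  by move=> kK k0; rewrite divn_gt0 // dvdn_leq // ltnS leq_div.
split=> hyp k k0.
  have sums n : 0 < n < #|G|.+1 ->
      (\sum_(x in G) (#|('C_G[x])%g|%:R : algC) ^+ n =
      \sum_(y in H) (#|('C_H[y])%g|%:R : algC) ^+ n)%R.
    move=> nN; have := hyp n nN; rewrite !mformula GH.
    by move/(GRing.mulfI (etrans (congr1 (fun m => ((m%:R)^-1 : algC)%R != 0%R) (esym GH)) Ninv)).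
  apply/eqP; rewrite -(eqn_pmul2r k0); apply/eqP.
  have eG : [set C in classes G | #|C| == k] = [set C in classes G | (#|C| == k) && true].
    by apply/setP=> C; rewrite !inE andbT.
  have eH : [set C in classes H | #|C| == k] = [set C in classes H | (#|C| == k) && true].
    by apply/setP=> C; rewrite !inE andbT.
  rewrite /nclasses_of_size eG eH !classcount.
  rewrite (count_via G (fun _ => true) k0) (count_via H (fun _ => true) k0) -GH.
  case: ifP => // kN.
  apply: (key (cbound _ G)); first by rewrite GH; apply: cbound.
    exact: sums.
  by apply: vbound.
have sums n : 0 < n < #|G|.+1 ->
    (\sum_(x in G) ((aR G x)%:R : algC) ^+ n =
    \sum_(y in H) ((aR H y)%:R : algC) ^+ n)%R.
  move=> nN; have := hyp n nN; rewrite !rformula GH.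
  by move/(GRing.mulfI (etrans (congr1 (fun m => ((m%:R)^-1 : algC)%R != 0%R) (esym GH)) Ninv)).
have abound (fT : finGroupType) (K : {group fT}) : {in K, forall x, aR K x < #|K|.+1}.
  move=> x xK; rewrite /aR; case: ifP => // _; exact: cbound.
apply/eqP; rewrite -(eqn_pmul2r k0); apply/eqP.
rewrite /nreal_classes_of_size !classcount.
have eq (fT : finGroupType) (K : {group fT}) :
   [set x in K | (#|(x ^: K)%g| == k) && (((x ^: K)^-1)%g == (x ^: K)%g)] =
   [set x in K | (#|(x ^: K)%g| == k) && (x \in ((x^-1) ^: K)%g)].
  apply/setP => x; rewrite !inE -classVg; congr (_ && (_ && _)).
  by rewrite eq_sym; apply/eqP/class_eqP.
rewrite !eq (count_via G (fun x => x \in ((x^-1) ^: G)%g) k0).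
rewrite (count_via H (fun x => x \in ((x^-1) ^: H)%g) k0) -GH.
case: ifP => // kN.
apply: (key (abound _ G)); first by rewrite GH; apply: abound.
  exact: sums.
by apply: vbound.
Qed.
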